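(* Let $E$ be a finite set and $\mathcal{O}\subseteq\{+,-,0\}^E$ satisfy (O3): $X,Y\in\mathcal{O}\Rightarrow X\circ Y\in\mathcal{O}$. Then $\mathcal{O}$ satisfies (O4) if and only if it satisfies (O4'), where (O4): if $X,Y\in\mathcal{O}$ with $\underline{X}=\underline{Y}$ and $X\neq Y$, then $I_e(X,Y)\cap\mathcal{O}\neq\emptyset$ for all $e\in S(X,Y)$; (O4'): if $X,Y\in\mathcal{O}$ with $\underline{X}=\underline{Y}$ and $X\neq Y$, then $I(X,Y)\cap\mathcal{O}\neq\emptyset$.
   Context: For $X\in\{+,-,0\}^E$: support $\underline{X}=\{e:X_e\neq0\}$; composition $(X\circ Y)_e=X_e$ if $X_e\neq0$, else $Y_e$; separation set $S(X,Y)=\{e: X_e,Y_e\neq0, X_e\neq Y_e\}$. For $X,Y$ with $\underline{X}=\underline{Y}$, $X\neq Y$ and $e\in S(X,Y)$: $I_e(X,Y)=\{V\in\{+,-,0\}^E : \underline{V}\subseteq\underline{X}\setminus\{e\},\ V_f=X_f\ \forall f\notin S(X,Y)\}$ and $I(X,Y)=\bigcup_{e\in S(X,Y)}I_e(X,Y)$. *)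

(* Defs.v *)
From mathcomp Require Import all_boot.
Set Implicit Arguments. Unset Strict Implicit. Unset Printing Implicit Defensive.

Inductive sign := Plus | Minus | Zero.

Definition signvec (E : finType) := E -> sign.

Definition supp (E : finType) (X : signvec E) : E -> Prop := fun e => X e <> Zero.

Definition comp (E : finType) (X Y : signvec E) : signvec E :=
  fun e => match X e with Zero => Y e | s => s end.

Definition sep (E : finType) (X Y : signvec E) (e : E) : Prop :=
  X e <> Zero /\ Y e <> Zero /\ X e <> Y e.

Definition Ie (E : finType) (X Y : signvec E) (e : E) (V : signvec E) : Prop :=
  (forall f, V f <> Zero -> X f <> Zero /\ f <> e) /\
  (forall f, ~ sep X Y f -> V f = X f).

Definition Iu (E : finType) (X Y : signvec E) (V : signvec E) : Prop :=
  exists e, sep X Y e /\ Ie X Y e V.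

Definition O3 (E : finType) (O : signvec E -> Prop) : Prop :=
  forall X Y, O X -> O Y -> O (comp X Y).

Definition O4 (E : finType) (O : signvec E -> Prop) : Prop :=
  forall X Y, O X -> O Y -> (forall f, supp X f <-> supp Y f) -> X <> Y ->
    forall e, sep X Y e -> exists V, Ie X Y e V /\ O V.

Definition O4' (E : finType) (O : signvec E -> Prop) : Prop :=
  forall X Y, O X -> O Y -> (forall f, supp X f <-> supp Y f) -> X <> Y ->
    exists V, Iu X Y V /\ O V.

(* Main.v *)
Require Import Defs.
From mathcomp Require Import all_boot.
From Stdlib Require Import Classical FunctionalExtensionality.
Set Implicit Arguments. Unset Strict Implicit.

Definition sepb (E : finType) (X Y : signvec E) (f : E) : bool :=
  match X f, Y f with
  | Plus, Minus => true | Minus, Plus => true | _, _ => false end.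

Lemma sepP (E : finType) (X Y : signvec E) f : sep X Y f <-> sepb X Y f = true.
Proof. rewrite /sep /sepb; case: (X f); case: (Y f); intuition congruence. Qed.

Lemma nsepP (E : finType) (X Y : signvec E) f : ~ sep X Y f <-> sepb X Y f = false.
Proof. rewrite sepP; case: (sepb X Y f); intuition congruence. Qed.

Lemma IeP (E : finType) (X Y : signvec E) e V : Ie X Y e V <->
  (forall f, V f <> Zero -> X f <> Zero /\ f <> e) /\
  (forall f, sepb X Y f = false -> V f = X f).
Proof.
  rewrite /Ie; split => [[H1 H2]|[H1 H2]]; split => // f Hf; apply: H2;
  by apply/nsepP.
Qed.

Definition cS (E : finType) (X Y : signvec E) := #|[pred f | sepb X Y f]|.

Lemma cS_lt (E : finType) (X Y A B : signvec E) e1 :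
  (forall f, sepb A B f -> sepb X Y f) -> sepb X Y e1 -> sepb A B e1 = false ->
  cS A B < cS X Y.
Proof.
  move=> Hs H1 H2; apply: proper_card; apply/properP; split.
  by apply/subsetP => f; rewrite !inE; apply: Hs.
  by exists e1; rewrite !inE ?H2.
Qed.

Ltac sg := repeat match goal with
  | |- context [?X ?f] => match type of (X f) with sign => 
        let h := fresh in destruct (X f) eqn:h end
  end.

Ltac pw := unfold Defs.comp, supp, sepb; sg; cbn; intuition congruence.

Lemma key (E : finType) (O : signvec E -> Prop) : O3 O -> O4' O ->
  forall n X Y, cS X Y < n -> O X -> O Y -> (forall f, supp X f <-> supp Y f) ->
  forall e, sepb X Y e -> exists V, Ie X Y e V /\ O V.
Proof.
  move=> H3 H4 n; elim: n => // n IH X Y Hn OX OY Hs e He.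
  have XY : X <> Y by move=> h; subst; move: He; rewrite /sepb; case: (Y e).
  have [V1 [[e1 [Hse1 HI]] OV]] := H4 X Y OX OY Hs XY.
  move/IeP: HI => [H1 H2]; move/sepP: Hse1 => Hse1.
  have V1e1 : V1 e1 = Zero.
    by case E1: (V1 e1) => //; have [_ []] := H1 e1 ltac:(by rewrite E1).
  have Hcase : V1 e = Zero \/ V1 e = X e \/ V1 e = Y e.
    by move: He; rewrite /sepb; case: (X e); case: (Y e); case: (V1 e); auto.
  case: Hcase => [Ve|[Ve|Ve]].
  - exists V1; split => //; apply/IeP; split => // f Hf.
    have [a b] := H1 f Hf; split => // fe; subst f; by rewrite Ve in Hf.
  - pose Z := Defs.comp V1 Y.
    have OZ : O Z by apply: H3.
    have HsZ : forall f, supp Z f <-> supp Y f.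
      move=> f; move: (H1 f) (Hs f); rewrite /Z; pw.
    have Hlt : cS Z Y < cS X Y.
      apply: (@cS_lt _ X Y Z Y e1) => //.
      + move=> f; move: (H1 f) (H2 f) (Hs f); rewrite /Z; pw.
      + move: V1e1; rewrite /Z; pw.
    have HeZ : sepb Z Y e by move: He Ve; rewrite /Z; pw.
    have [V2 [HV2 OV2]] := IH Z Y (leq_trans Hlt Hn) OZ OY HsZ e HeZ.
    exists V2; split => //; move/IeP: HV2 => [G1 G2]; apply/IeP; split => f.
    + move=> /G1 [a b]; split => //; move: a (H1 f) (Hs f); rewrite /Z; pw.
    + move=> Hf; have Hf' : sepb Z Y f = false.
        by move: Hf (H1 f) (H2 f) (Hs f); rewrite /Z; pw.
      rewrite (G2 f Hf'); move: Hf (H1 f) (H2 f) (Hs f); rewrite /Z; pw.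
  - pose W := Defs.comp V1 X.
    have OW : O W by apply: H3.
    have HsW : forall f, supp X f <-> supp W f.
      move=> f; move: (H1 f) (Hs f); rewrite /W; pw.
    have Hlt : cS X W < cS X Y.
      apply: (@cS_lt _ X Y X W e1) => //.
      + move=> f; move: (H1 f) (H2 f) (Hs f); rewrite /W; pw.
      + move: V1e1; rewrite /W; pw.
    have HeW : sepb X W e by move: He Ve; rewrite /W; pw.
    have [V2 [HV2 OV2]] := IH X W (leq_trans Hlt Hn) OX OW HsW e HeW.
    exists V2; split => //; move/IeP: HV2 => [G1 G2]; apply/IeP; split => // f Hf.
    apply: G2; move: Hf (H1 f) (H2 f) (Hs f); rewrite /W; pw.
Qed.

Theorem lemma2p1 (E : finType) (O : signvec E -> Prop) :
  O3 O -> (O4 O <-> O4' O).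
Proof.
  move=> H3; split.
  - move=> H4 X Y OX OY Hs XY.
    have [e He] : exists e, X e <> Y e.
      apply: NNPP => h; apply: XY; apply: functional_extensionality => f.
      by apply: NNPP => h'; apply: h; exists f.
    have Hse : sep X Y e.
      move: (Hs e) He; rewrite /supp /sep; case: (X e); case: (Y e); intuition congruence.
    have [V [HV OV]] := H4 X Y OX OY Hs XY e Hse.
    by exists V; split => //; exists e.
  - move=> H4 X Y OX OY Hs XY e /sepP He.
    exact: (key H3 H4 (n := (cS X Y).+1)).
Qed.
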